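(* Let $f\in\mathbb F_q[t;\theta]$ have degree $\ge1$. Then $f$ is irreducible in $\mathbb F_q[t;\theta]$ if and only if $f^{[]}(x)$ has no divisor $u(x)\in\mathbb F_q[x^{[]}]$ (divisibility in $\mathbb F_q[x]$) with $0<\deg u<\deg f^{[]}$.
   Context: $p$ is a prime, $q=p^n$, $\theta$ is the Frobenius map $g\mapsto g^p$ on $\mathbb F_q$ and on $\mathbb F_q[x]$. $\mathbb F_q[t;\theta]$ is the skew polynomial ring with $ta=\theta(a)t$; it is contained in $S=\mathbb F_q[x][t;\theta]$ (where $tg=g^pt$). For $u\in S$ and $h\in\mathbb F_q[x]$, $u(h)$ is the unique element of $\mathbb F_q[x]$ with $u-u(h)\in S(t-h)$. For $f\in\mathbb F_q[t;\theta]$, $f^{[]}(x):=f(x)\in\mathbb F_q[x]$; explicitly, if $f=\sum a_it^i$ then $f^{[]}(x)=\sum a_ix^{[i]}$ where $[i]=\frac{p^i-1}{p-1}$ for $i\ge1$, $[0]=0$. $\mathbb F_q[x^{[]}]=\{\sum\alpha_ix^{[i]}\mid\alpha_i\in\mathbb F_q\}$. Irreducible means: not a unit and not a product of two non-units. *)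

(* Defs.v *)
From HB Require Import structures.
From mathcomp Require Import all_boot all_order all_algebra all_field.
Set Implicit Arguments. Unset Strict Implicit. Unset Printing Implicit Defensive.
Import GRing.Theory.
Local Open Scope ring_scope.

(* Skew polynomials F[t; theta], theta = Frobenius a |-> a^p, are represented
   by their coefficient sequences, stored in {poly F}: f = \sum_i f`_i t^i.
   Multiplication: (a t^i)(b t^j) = a theta^i(b) t^(i+j), theta^i(b) = b^(p^i). *)
Definition skew_mul (F : fieldType) (p : nat) (f g : {poly F}) : {poly F} :=
  \sum_(i < size f) \sum_(j < size g)
     (f`_i * g`_j ^+ (p ^ i)%N) *: 'X^(i + j).

Definition skew_unit (F : fieldType) (p : nat) (f : {poly F}) : Prop :=
  exists g : {poly F}, skew_mul p f g = 1 /\ skew_mul p g f = 1.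

Definition skew_irreducible (F : fieldType) (p : nat) (f : {poly F}) : Prop :=
  ~ skew_unit p f /\
  forall g h : {poly F}, f = skew_mul p g h -> skew_unit p g \/ skew_unit p h.

Definition bracket (p i : nat) : nat := ((p ^ i - 1) %/ (p - 1))%N.

Definition linearized (F : fieldType) (p : nat) (f : {poly F}) : {poly F} :=
  \sum_(i < size f) f`_i *: 'X^(bracket p i).

Definition in_bracket_span (F : fieldType) (p : nat) (u : {poly F}) : Prop :=
  exists s : seq F, u = \sum_(i < size s) s`_i *: 'X^(bracket p i).

(* Main.v *)
Require Import Defs.
From HB Require Import structures.
From mathcomp Require Import all_boot all_order all_algebra all_field.
From mathcomp Require Import zify.
Import GRing.Theory.
Local Open Scope ring_scope.

Fixpoint bb (p i : nat) : nat := if i is i'.+1 then (bb p i' + p ^ i')%N else 0%N.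

Lemma bbE p i : (0 < p)%N -> (bb p i * (p - 1) + 1)%N = (p ^ i)%N.
Proof.
move=> p0; elim: i => [|i IH] //=.
rewrite expnS; move: IH; set x := (p ^ i)%N; set b := bb p i.
have -> : p = ((p - 1) + 1)%N by lia.
set c := (p - 1 + 1 - 1)%N; have -> : c = (p - 1)%N by rewrite /c; lia.
move=> IH; nia.
Qed.

Lemma bracketE p i : (1 < p)%N -> bracket p i = bb p i.
Proof.
move=> p1; rewrite /bracket -(bbE p i (ltnW p1)) addnK mulnK //; lia.
Qed.

Lemma bbD p i j : bb p (i + j) = (bb p i + p ^ i * bb p j)%N.
Proof.
elim: j => [|j IH] /=; first by rewrite addn0 muln0 addn0.
by rewrite addnS /= IH expnD mulnDr addnA.
Qed.

Lemma bb_ge1 p j : (0 < p)%N -> (0 < j)%N -> (0 < bb p j)%N.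
Proof. by move=> p0; case: j => //= j _; rewrite addn_gt0 expn_gt0 p0 orbT. Qed.

Lemma bracket_ltE p i j : (1 < p)%N -> (bracket p i < bracket p j)%N = (i < j)%N.
Proof.
move=> p1; rewrite !bracketE //.
have lt : forall a b, (a < b)%N -> (bb p a < bb p b)%N.
  move=> a b ab; have -> : b = (a + (b - a))%N by lia.
  rewrite bbD; have h2 := @bb_ge1 p (b - a)%N (ltnW p1) ltac:(lia).
  have h1 : (0 < p ^ a)%N by rewrite expn_gt0 ltnW.
  nia.
case: (ltngtP i j) => [/lt -> //| /lt h | ->]; last by rewrite ltnn.
by apply/negbTE; rewrite -leqNgt ltnW.
Qed.

Lemma bracket0 p : bracket p 0 = 0%N.
Proof. by rewrite /bracket expn0 subnn div0n. Qed.

Lemma bracketD p i j : (1 < p)%N -> bracket p (i + j) = (bracket p j * p ^ i + bracket p i)%N.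
Proof. by move=> p1; rewrite !bracketE // bbD mulnC addnC. Qed.

Lemma lin_sum (F : fieldType) p (f : {poly F}) n : (size f <= n)%N ->
  linearized p f = \sum_(i < n) f`_i *: 'X^(bracket p i).
Proof.
move=> sn; rewrite /linearized (big_ord_widen n (fun i => f`_i *: 'X^(bracket p i))) //.
rewrite big_mkcond; apply: eq_bigr => i _; case: ifP => // /negbT.
by rewrite -leqNgt => H; rewrite nth_default // scale0r.
Qed.

Lemma lin0 (F : fieldType) p : linearized p (0 : {poly F}) = 0.
Proof. by rewrite /linearized size_poly0 big_ord0. Qed.

Lemma linD (F : fieldType) p (f g : {poly F}) :
  linearized p (f + g) = linearized p f + linearized p g.
Proof.
set n := maxn (size f) (size g).
rewrite !(@lin_sum _ _ _ n) ?leq_maxl ?leq_maxr ?(leq_trans (size_polyD _ _)) //.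
by rewrite -big_split; apply: eq_bigr => i _; rewrite coefD scalerDl.
Qed.

Lemma lin_mono (F : fieldType) p (c : F) k :
  linearized p (c *: 'X^k) = c *: 'X^(bracket p k).
Proof.
rewrite (@lin_sum _ _ _ k.+1); last by rewrite (leq_trans (size_scale_leq _ _)) // size_polyXn.
rewrite big_ord_recr /= coefZ coefXn eqxx mulr1 big1 ?add0r // => i _.
by rewrite coefZ coefXn ltn_eqF // mulr0 scale0r.
Qed.

Lemma lin_sumE (F : fieldType) p (I : Type) (r : seq I) (P : pred I) (G : I -> {poly F}) :
  linearized p (\sum_(i <- r | P i) G i) = \sum_(i <- r | P i) linearized p (G i).
Proof. exact: (big_morph _ (@linD F p) (lin0 F p)). Qed.

Lemma skew_sum (F : fieldType) p (f g : {poly F}) n m : (0 < p)%N ->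
  (size f <= n)%N -> (size g <= m)%N ->
  skew_mul p f g = \sum_(i < n) \sum_(j < m) (f`_i * g`_j ^+ (p ^ i)) *: 'X^(i + j).
Proof.
move=> p0 sn sm; rewrite /skew_mul.
rewrite (big_ord_widen n (fun i => \sum_(j < size g) (f`_i * g`_j ^+ (p ^ i)) *: 'X^(i + j))) //.
rewrite big_mkcond; apply: eq_bigr => i _; case: ifP => [_|/negbT].
  rewrite (big_ord_widen m (fun j => (f`_i * g`_j ^+ (p ^ i)) *: 'X^(i + j))) //.
  rewrite big_mkcond; apply: eq_bigr => j _; case: ifP => // /negbT.
  rewrite -leqNgt => H; rewrite (nth_default _ H) expr0n.
  by rewrite (negbTE (_ : p ^ i != 0)%N) ?mulr0 ?scale0r // -lt0n expn_gt0 p0.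
rewrite -leqNgt => H; rewrite big1 // => j _.
by rewrite (nth_default _ H) mul0r scale0r.
Qed.

Lemma skew_mul0l (F : fieldType) p (g : {poly F}) : skew_mul p 0 g = 0.
Proof. by rewrite /skew_mul size_poly0 big_ord0. Qed.

Lemma skew_mul0r (F : fieldType) p (g : {poly F}) : skew_mul p g 0 = 0.
Proof. by rewrite /skew_mul big1 // => i _; rewrite size_poly0 big_ord0. Qed.

Lemma skew_mulDl (F : fieldType) p (f1 f2 g : {poly F}) : (0 < p)%N ->
  skew_mul p (f1 + f2) g = skew_mul p f1 g + skew_mul p f2 g.
Proof.
move=> p0; set n := maxn (size f1) (size f2).
have h1 : (size f1 <= n)%N by rewrite leq_maxl.
have h2 : (size f2 <= n)%N by rewrite leq_maxr.
have h3 : (size (f1 + f2)%R <= n)%N by rewrite (leq_trans (size_polyD _ _)).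
rewrite !(@skew_sum _ _ _ _ n (size g)) // -big_split; apply: eq_bigr => i _.
by rewrite -big_split; apply: eq_bigr => j _; rewrite coefD mulrDl scalerDl.
Qed.

Lemma skewM_sum (F : fieldType) p (f g : {poly F}) :
  skew_mul p f g = \sum_(i < size f) 'X^i * \poly_(j < size g) (f`_i * g`_j ^+ (p ^ i)).
Proof.
rewrite /skew_mul; apply: eq_bigr => i _; rewrite poly_def mulr_sumr.
by apply: eq_bigr => j _; rewrite exprD scalerAr.
Qed.

Lemma skew_monoE (F : fieldType) p (c : F) d (h : {poly F}) : (0 < p)%N ->
  skew_mul p (c *: 'X^d) h = 'X^d * \poly_(j < size h) (c * h`_j ^+ (p ^ d)).
Proof.
move=> p0; rewrite (@skew_sum _ _ _ _ d.+1 (size h)) //; last first.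
  by rewrite (leq_trans (size_scale_leq _ _)) // size_polyXn.
rewrite big_ord_recr /= big1 ?add0r => [|i _]; last first.
  by rewrite big1 // => j _; rewrite coefZ coefXn ltn_eqF // mulr0 mul0r scale0r.
rewrite poly_def mulr_sumr; apply: eq_bigr => j _.
by rewrite coefZ coefXn eqxx mulr1 exprD scalerAr.
Qed.

Lemma size_skew_mul (F : fieldType) p (f g : {poly F}) : (0 < p)%N ->
  f != 0 -> g != 0 -> size (skew_mul p f g) = (size f + size g).-1.
Proof.
move=> p0 f0 g0; rewrite skewM_sum.
have sf : (0 < size f)%N by rewrite size_poly_gt0.
have sg : (0 < size g)%N by rewrite size_poly_gt0.
move: (f0); rewrite -lead_coef_eq0 lead_coefE; move: (g0); rewrite -lead_coef_eq0 lead_coefE.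
case ef: (size f) sf => [//|k] _; case eg: (size g) sg => [//|l] _ /= gl fl.
have nzP : \poly_(j < l.+1) (f`_k * g`_j ^+ (p ^ k)) != 0.
  by rewrite -size_poly_gt0 size_poly_eq // mulf_neq0 // expf_neq0.
have sP : size ('X^k * \poly_(j < l.+1) (f`_k * g`_j ^+ (p ^ k))) = (k + l.+1)%N.
  by rewrite mulrC size_mulXn // size_poly_eq // mulf_neq0 // expf_neq0.
rewrite big_ord_recr /= addrC size_polyDl sP; first by rewrite addnS.
apply: (big_ind (fun q : {poly F} => size q < (k + l.+1)%N)%N); first by rewrite size_poly0; lia.
  by move=> x y hx hy; rewrite (leq_ltn_trans (size_polyD _ _)) // gtn_max hx hy.
move=> i _; rewrite mulrC.
have [->|nz] := eqVneq (\poly_(j < l.+1) (f`_i * g`_j ^+ (p ^ i))) 0.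
  by rewrite mul0r size_poly0; lia.
rewrite size_mulXn // (leq_trans (_ : _ < i + l.+2)%N) //.
  by rewrite ltn_add2l ltnS size_poly.
by have := ltn_ord i; lia.
Qed.

Lemma unit_size (F : fieldType) p (g : {poly F}) : (0 < p)%N -> skew_unit p g -> size g = 1%N.
Proof.
move=> p0 [g' [H _]].
have g0 : g != 0 by apply/eqP => e; move: H; rewrite e skew_mul0l => /eqP; rewrite eq_sym oner_eq0.
have g'0 : g' != 0 by apply/eqP => e; move: H; rewrite e skew_mul0r => /eqP; rewrite eq_sym oner_eq0.
have := @size_skew_mul _ p g g' p0 g0 g'0; rewrite H size_poly1.
have := size_poly_gt0 g; have := size_poly_gt0 g'; rewrite g0 g'0; lia.
Qed.

Lemma const_unit (F : fieldType) p (g : {poly F}) : (0 < p)%N -> size g = 1%N -> skew_unit p g.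
Proof.
move=> p0 sg; have eg : g = (g`_0)%:P by apply: size1_polyC; rewrite sg.
have c0 : g`_0 != 0 by apply/eqP => e; move: sg; rewrite eg e polyC0 size_poly0.
exists (g`_0)^-1%:P; rewrite eg; split.
- rewrite (@skew_sum _ _ _ _ 1 1) ?size_polyC_leq1 // !big_ord1 !coefC /= expn0 expr1.
  by rewrite mulfV // scale1r.
- rewrite (@skew_sum _ _ _ _ 1 1) ?size_polyC_leq1 // !big_ord1 !coefC /= expn0 expr1.
  by rewrite mulVf // scale1r.
Qed.

Lemma size_lin (F : fieldType) p (f : {poly F}) : (1 < p)%N -> f != 0 ->
  size (linearized p f) = (bracket p (size f).-1).+1.
Proof.
move=> p1 f0; rewrite /linearized.
move: (f0); rewrite -lead_coef_eq0 lead_coefE.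
case ef: (size f) (size_poly_gt0 f) => [|k]; first by rewrite f0.
move=> _ /= fl; rewrite big_ord_recr /= addrC size_polyDl size_scale // size_polyXn //.
apply: (big_ind (fun q : {poly F} => size q < (bracket p k).+1)%N); first by rewrite size_poly0.
  by move=> x y hx hy; rewrite (leq_ltn_trans (size_polyD _ _)) // gtn_max hx hy.
move=> i _; rewrite (leq_ltn_trans (size_scale_leq _ _)) // size_polyXn ltnS.
by rewrite bracket_ltE.
Qed.

Lemma lin_eq0 (F : fieldType) p (f : {poly F}) : (1 < p)%N -> linearized p f = 0 -> f = 0.
Proof.
move=> p1 e; apply/eqP; apply/negP => /negP f0.
by move: (@size_lin _ p f p1 f0); rewrite e size_poly0.
Qed.

Lemma frob_sum (F : fieldType) p (hc : p \in [pchar F]) n (I : Type) (r : seq I)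
   (P : pred I) (G : I -> {poly F}) :
  (\sum_(i <- r | P i) G i) ^+ (p ^ n) = \sum_(i <- r | P i) (G i) ^+ (p ^ n).
Proof.
have chp : p \in [pchar {poly F}] by rewrite pchar_poly.
elim: n => [|n IH]; first by rewrite expn0 expr1; apply: eq_bigr => i _; rewrite expr1.
rewrite expnSr exprM IH -(pFrobenius_autE chp) rmorph_sum.
by apply: eq_bigr => i _; rewrite exprM -(pFrobenius_autE chp).
Qed.

Lemma lin_mul (F : fieldType) p (hp : prime p) (hc : p \in [pchar F]) (g h : {poly F}) :
  linearized p (skew_mul p g h) =
  \sum_(i < size g) g`_i *: ((linearized p h) ^+ (p ^ i) * 'X^(bracket p i)).
Proof.
have p1 := prime_gt1 hp.
rewrite /skew_mul lin_sumE; apply: eq_bigr => i _.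
rewrite lin_sumE {2}/linearized frob_sum // mulr_suml scaler_sumr; apply: eq_bigr => j _.
rewrite lin_mono exprZn -exprM -scalerAl -exprD scalerA -bracketD //.
Qed.

Lemma lin_dvd (F : fieldType) p (hp : prime p) (hc : p \in [pchar F]) (g h : {poly F}) :
  linearized p h %| linearized p (skew_mul p g h).
Proof.
rewrite lin_mul //; apply: (big_ind (fun q => linearized p h %| q)); first exact: dvdp0.
  by move=> x y; apply: dvdp_add.
move=> i _; have [->|c0] := eqVneq g`_i 0; first by rewrite scale0r dvdp0.
rewrite dvdpZr //; apply: dvdp_mulr; apply: dvdp_exp => //.
by rewrite expn_gt0 prime_gt0.
Qed.

Lemma skew_div (F : fieldType) p (h : {poly F}) : (0 < p)%N -> h != 0 ->
  forall f : {poly F}, exists q r, f = skew_mul p q h + r /\ (size r < size h)%N.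
Proof.
move=> p0 h0 f.
have sh : (0 < size h)%N by rewrite size_poly_gt0.
move: {2}(size f) (leqnn (size f)) => n; elim: n f => [|n IH] f sf.
  by exists 0, f; rewrite skew_mul0l add0r; split => //; lia.
have [lt|ge] := ltnP (size f) (size h).
  by exists 0, f; rewrite skew_mul0l add0r.
set d := (size f - size h)%N.
set c := lead_coef f / lead_coef h ^+ (p ^ d).
set f' := f - skew_mul p (c *: 'X^d) h.
have sf' : (size f' <= n)%N.
  apply/leq_sizeP => j jn; rewrite /f' coefB skew_monoE // coefXnM coef_poly.
  have -> : (j < d)%N = false by apply/negbTE; rewrite -leqNgt; lia.
  have [e|ne] := eqVneq j (size f).-1.
    have -> : (j - d < size h)%N = true by apply/idP; lia.
    have -> : (j - d)%N = (size h).-1 by lia.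
    rewrite e -!lead_coefE /c divfK ?subrr //.
    by rewrite expf_neq0 // lead_coef_eq0.
  move/eqP: ne => ne; rewrite nth_default; last by clear -sf jn ne; move: sf jn ne; move: (size f) => s; lia.
  case: ifP => [lt|]; last by rewrite subrr.
  exfalso; move: lt; rewrite /d; clear -sf jn ne ge; move: sf jn ne ge; move: (size f) (size h) => s t; lia.
have [q [r [e sr]]] := IH f' sf'.
exists (q + c *: 'X^d), r; split => //.
by rewrite skew_mulDl // addrAC -e /f' subrK.
Qed.

Theorem corollary2p6 (F : finFieldType) (p : nat) (hp : prime p)
    (hchar : p \in [pchar F]) (f : {poly F}) (hdeg : (1 <= (size f).-1)%N) :
  skew_irreducible p f <->
  ~ (exists u : {poly F},
       [/\ in_bracket_span p u, u %| linearized p f,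
           (0 < (size u).-1)%N & ((size u).-1 < (size (linearized p f)).-1)%N]).
Proof.
have p1 := prime_gt1 hp; have p0 := ltnW p1.
have f0 : f != 0 by rewrite -size_poly_gt0; lia.
rewrite (@size_lin _ p f p1 f0) /=.
split.
- move=> [hnu hfac] [u [[s hs] hdiv hu0 hlt]].
  set h := Poly s.
  have Lh : linearized p h = u.
    rewrite hs (@lin_sum _ _ _ (size s)) ?size_Poly //.
    by apply: eq_bigr => i _; rewrite coef_Poly.
  have h0 : h != 0.
    by apply/eqP => e; move: hu0; rewrite -Lh e lin0 size_poly0.
  move: hu0 hlt hdiv; rewrite -Lh (@size_lin _ p h p1 h0) /= => hu0 hlt hdiv.
  rewrite bracket_ltE // in hlt.
  have sh1 : (size h).-1 <> 0%N by move=> e; move: hu0; rewrite e bracket0.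
  have [q [r [e sr]]] := @skew_div _ p h p0 h0 f.
  have r0 : r = 0.
    apply/eqP; apply/negP => /negP r0.
    have : linearized p h %| linearized p r.
      by rewrite -(dvdp_addr _ (@lin_dvd _ p hp hchar q h)) -linD -e.
    move/(dvdp_leq (_ : linearized p r != 0)).
    have lr0 : linearized p r != 0 by apply/eqP => /(@lin_eq0 _ p r p1); apply/eqP.
    move=> /(_ lr0); rewrite (@size_lin _ p h p1 h0) (@size_lin _ p r p1 r0) ltnS.
    rewrite leqNgt bracket_ltE //; move: (size_poly_gt0 r); rewrite r0.
    by move: sr sh1; move: (size r) (size h) => a b; lia.
  move: e; rewrite r0 addr0 => e.
  have q0 : q != 0 by apply/eqP => q0; move: f0; rewrite e q0 skew_mul0l eqxx.
  have sf := @size_skew_mul _ p q h p0 q0 h0; rewrite -e in sf.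
  case: (hfac q h e) => /(@unit_size _ p _ p0) s1.
    by move: sf hlt; rewrite s1; move: (size f) (size h) => a b; lia.
  by apply: sh1; rewrite s1.
- move=> hno; split.
    by move/(@unit_size _ p _ p0) => e; move: hdeg; rewrite e.
  move=> g h e.
  have [g1|g1] := eqVneq (size g) 1%N; first by left; exact: (@const_unit _ p g p0 g1).
  have [h1|h1] := eqVneq (size h) 1%N; first by right; exact: (@const_unit _ p h p0 h1).
  exfalso; apply: hno; exists (linearized p h).
  have g0 : g != 0 by apply/eqP => g0; move: f0; rewrite e g0 skew_mul0l eqxx.
  have h0 : h != 0 by apply/eqP => h0; move: f0; rewrite e h0 skew_mul0r eqxx.
  have sf := @size_skew_mul _ p g h p0 g0 h0; rewrite -e in sf.
  move: (size_poly_gt0 g) (size_poly_gt0 h); rewrite g0 h0 => gg hh.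
  split.
  + by exists h.
  + by rewrite e; apply: lin_dvd.
  + rewrite (@size_lin _ p h p1 h0) /= -(bracket0 p) bracket_ltE //.
    by move/eqP: h1 => h1; move: hh h1; move: (size h) => a; lia.
  + rewrite (@size_lin _ p h p1 h0) /= bracket_ltE //.
    move/eqP: g1 => g1; move/eqP: h1 => h1.
    by move: sf gg hh g1 h1; move: (size f) (size g) (size h) => a b c; lia.
Qed.
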